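(* Let $\alpha,\beta>0$, let $c(\psi)=\sqrt{\alpha\cos^2\psi+\beta\sin^2\psi}$, let $p\ge0$ be an integer, and let $X_{\Delta x}^p(\Omega)$ be the discontinuous piecewise polynomial space on the periodic mesh described in the context. Suppose $v,w,\psi:[0,T]\to X_{\Delta x}^p(\Omega)$ are differentiable in time and, for every $t\in[0,T]$, satisfy (with $c=c(\psi(x,t))$ inside integrals, $x$-derivatives taken cellwise, sums over $j=1,\dots,N$) $$\sum_j\int_{\Omega_j}v_t\phi\,dx+\sum_j\int_{\Omega_j}c\,w\phi_x\,dx-\sum_j\overline{c}_{j+1/2}\overline{w}_{j+1/2}\phi^-_{j+1/2}+\sum_j\overline{c}_{j-1/2}\overline{w}_{j-1/2}\phi^+_{j-1/2}=\sum_j\int_{\Omega_j}c\,(w\phi)_x\,dx-\sum_j\overline{c}_{j+1/2}w^-_{j+1/2}\phi^-_{j+1/2}+\sum_j\overline{c}_{j-1/2}w^+_{j-1/2}\phi^+_{j-1/2},$$ $$\sum_j\int_{\Omega_j}w_t\eta\,dx+\sum_j\int_{\Omega_j}c\,v\eta_x\,dx-\sum_j\overline{c}_{j+1/2}\overline{v}_{j+1/2}\eta^-_{j+1/2}+\sum_j\overline{c}_{j-1/2}\overline{v}_{j-1/2}\eta^+_{j-1/2}=0,$$ $$\sum_j\int_{\Omega_j}\psi_t\zeta\,dx=\sum_j\int_{\Omega_j}v\zeta\,dx,$$ for all $\phi,\eta,\zeta\in X_{\Delta x}^p(\Omega)$. Then $$\frac{d}{dt}\left(\sum_{j=1}^N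\int_{\Omega_j}(v^2+w^2)\,dx\right)=0.$$
   Context: The domain $\Omega$ is partitioned into cells $\Omega_j=[x_{j-1/2},x_{j+1/2}]$, $j=1,\dots,N$. $X_{\Delta x}^p(\Omega)=\{u\in L^2(\Omega): u|_{\Omega_j}$ is a polynomial of degree $\le p$ for each $j\}$. For a grid function $u$, $u^+_{j+1/2}$ and $u^-_{j+1/2}$ denote its traces at $x_{j+1/2}$ from the right and left respectively; $\overline{u}_{j+1/2}=(u^+_{j+1/2}+u^-_{j+1/2})/2$ and $\llbracket u\rrbracket_{j+1/2}=u^+_{j+1/2}-u^-_{j+1/2}$. Also $c^\pm_{j+1/2}=c(\psi^\pm_{j+1/2})$ and $\overline{c}_{j+1/2}=(c^+_{j+1/2}+c^-_{j+1/2})/2$. Periodic boundary conditions: the endpoints $x_{1/2}$ and $x_{N+1/2}$ are identified, i.e. $u^-_{1/2}:=u^-_{N+1/2}$ (trace from cell $N$) and $u^+_{N+1/2}:=u^+_{1/2}$ (trace from cell $1$), for all grid functions including $\psi$ and the test functions. *)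

(* Defs.v *)
From Stdlib Require Import Reals Lra List Arith.
From Coquelicot Require Import Coquelicot.
Open Scope R_scope.

Definition cfun (alpha beta y : R) : R :=
  sqrt (alpha * (cos y) ^ 2 + beta * (sin y) ^ 2).

(* Mesh: N cells, nodes xs i = x_{i+1/2}, i = 0..N; cell j (1<=j<=N) is
   Omega_j = [xs (j-1), xs j]. *)

(* A grid function in X^p is given by coefficients u j k (cell j, power k);
   on cell j it equals the polynomial  sum_{k=0}^p u j k x^k. *)
Definition pe (p : nat) (u : nat -> nat -> R) (j : nat) (x : R) : R :=
  sum_f_R0 (fun k => u j k * x ^ k) p.

Definition sumj (N : nat) (F : nat -> R) : R :=
  fold_right Rplus 0 (map F (seq 1 N)).

Definition cellint (xs : nat -> R) (j : nat) (f : R -> R) : R :=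
  RInt f (xs (j - 1)%nat) (xs j).

(* traces at interface x_{i+1/2}, i = 0..N, with periodic identification *)
Definition trR (N p : nat) (xs : nat -> R) (u : nat -> nat -> R) (i : nat) : R :=
  if Nat.eqb i N then pe p u 1 (xs 0%nat) else pe p u (S i) (xs i).
Definition trL (N p : nat) (xs : nat -> R) (u : nat -> nat -> R) (i : nat) : R :=
  if Nat.eqb i 0 then pe p u N (xs N) else pe p u i (xs i).
Definition avg (N p : nat) (xs : nat -> R) (u : nat -> nat -> R) (i : nat) : R :=
  (trR N p xs u i + trL N p xs u i) / 2.
Definition cbar (alpha beta : R) (N p : nat) (xs : nat -> R)
  (psi : nat -> nat -> R) (i : nat) : R :=
  (cfun alpha beta (trR N p xs psi i) + cfun alpha beta (trL N p xs psi i)) / 2.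

Definition deriv_within (a b : R) (f : R -> R) (t l : R) : Prop :=
  forall eps, 0 < eps -> exists delta, 0 < delta /\
    forall s, a <= s <= b -> Rabs (s - t) < delta ->
      Rabs (f s - f t - l * (s - t)) <= eps * Rabs (s - t).

(* Main.v *)
Require Import Defs.
From Stdlib Require Import Reals Lra Lia List Arith.
From Coquelicot Require Import Coquelicot.
Open Scope R_scope.

Lemma is_derive_sum (n : nat) (g : nat -> R -> R) (dg : nat -> R -> R) x :
  (forall k, is_derive (g k) x (dg k x)) ->
  is_derive (fun y => sum_f_R0 (fun k => g k y) n) x (sum_f_R0 (fun k => dg k x) n).
Proof.
  intros H. induction n as [|n IH]; simpl.
  - apply H.
  - apply (is_derive_plus (fun y => sum_f_R0 (fun k => g k y) n) (g (S n))); auto.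
Qed.

Lemma term_derive (a : R) (k : nat) y :
  is_derive (fun z => a * z ^ k) y (a * (INR k * y ^ Init.Nat.pred k)).
Proof.
  auto_derive; auto. ring.
Qed.

Lemma P_is_derive n (u : nat -> R) x :
  is_derive (fun y => sum_f_R0 (fun k => u k * y ^ k) n) x
    (sum_f_R0 (fun k => u k * (INR k * x ^ Init.Nat.pred k)) n).
Proof.
  apply (is_derive_sum n (fun k y => u k * y ^ k) (fun k x => u k * (INR k * x ^ Init.Nat.pred k))).
  intros; apply term_derive.
Qed.

Lemma P_ex_derive n u x : ex_derive (fun y => sum_f_R0 (fun k => u k * y ^ k) n) x.
Proof. eexists. apply P_is_derive. Qed.

Lemma exd_cont (f : R -> R) (x : R) : ex_derive f x -> continuous f x.
Proof. intros H. apply (ex_derive_continuous (K:=R_AbsRing) (V:=R_NormedModule) f x H). Qed.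

Lemma P_cont n u x : continuous (fun y => sum_f_R0 (fun k => u k * y ^ k) n) x.
Proof. apply exd_cont, P_ex_derive. Qed.

Lemma P'_cont n (u : nat -> R) x :
  continuous (fun y => sum_f_R0 (fun k => u k * (INR k * y ^ Init.Nat.pred k)) n) x.
Proof.
  apply exd_cont. eexists.
  apply (is_derive_sum n (fun k y => u k * (INR k * y ^ Init.Nat.pred k))
     (fun k x => u k * (INR k * (INR (Init.Nat.pred k) * x ^ Init.Nat.pred (Init.Nat.pred k))))).
  intros k. auto_derive; auto. ring.
Qed.

Lemma DP_cont n u x : continuous (Derive (fun y => sum_f_R0 (fun k => u k * y ^ k) n)) x.
Proof.
  eapply continuous_ext; [|apply (P'_cont n u x)].
  intros y. symmetry. apply is_derive_unique, P_is_derive.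
Qed.

Lemma c_cont alpha beta n u x :
  continuous (fun y => cfun alpha beta (sum_f_R0 (fun k => u k * y ^ k) n)) x.
Proof.
  unfold cfun. apply continuous_sqrt_comp.
  apply (continuous_plus (fun y => alpha * cos (sum_f_R0 (fun k => u k * y ^ k) n) ^ 2)
                          (fun y => beta * sin (sum_f_R0 (fun k => u k * y ^ k) n) ^ 2)).
  - apply (continuous_mult (fun _ => alpha)). apply continuous_const.
    simpl. apply (continuous_mult (fun y => cos (sum_f_R0 (fun k => u k * y ^ k) n))).
    + apply continuous_cos_comp, P_cont.
    + apply (continuous_mult (fun y => cos (sum_f_R0 (fun k => u k * y ^ k) n)) (fun _ => 1)).
      * apply continuous_cos_comp, P_cont.
      * apply continuous_const.
  - apply (continuous_mult (fun _ => beta)). apply continuous_const.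
    simpl. apply (continuous_mult (fun y => sin (sum_f_R0 (fun k => u k * y ^ k) n))).
    + apply continuous_sin_comp, P_cont.
    + apply (continuous_mult (fun y => sin (sum_f_R0 (fun k => u k * y ^ k) n)) (fun _ => 1)).
      * apply continuous_sin_comp, P_cont.
      * apply continuous_const.
Qed.

Lemma cont_sum n (g : nat -> R -> R) x :
  (forall k, continuous (g k) x) -> continuous (fun y => sum_f_R0 (fun k => g k y) n) x.
Proof.
  intros H. induction n as [|n IH]; simpl.
  - apply H.
  - apply (continuous_plus (fun y => sum_f_R0 (fun k => g k y) n) (g (S n))); auto.
Qed.

Lemma cont_RInt (f : R -> R) a b : (forall x, continuous f x) -> ex_RInt f a b.
Proof. intros H. apply (ex_RInt_continuous (V:=R_CompleteNormedModule)). intros; apply H. Qed.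

Lemma RInt_plus' (f g : R -> R) a b :
  (forall x, continuous f x) -> (forall x, continuous g x) ->
  RInt (fun x => f x + g x) a b = RInt f a b + RInt g a b.
Proof.
  intros Hf Hg. apply (RInt_plus f g); apply cont_RInt; auto.
Qed.

Lemma RInt_sum n (g : nat -> R -> R) a b :
  (forall k x, continuous (g k) x) ->
  RInt (fun x => sum_f_R0 (fun k => g k x) n) a b = sum_f_R0 (fun k => RInt (g k) a b) n.
Proof.
  intros H. induction n as [|n IH]; simpl.
  - reflexivity.
  - rewrite RInt_plus'. rewrite IH. reflexivity.
    intros; apply cont_sum; auto. auto.
Qed.

Lemma pow_cont (k : nat) x : continuous (fun y => y ^ k) x.
Proof. apply exd_cont. auto_derive. auto. Qed.

Lemma RInt_scal' (c : R) (f : R -> R) a b : (forall x, continuous f x) ->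
  RInt (fun x => c * f x) a b = c * RInt f a b.
Proof. intros H. apply (RInt_scal f a b c). apply cont_RInt; auto. Qed.

Lemma bilin n (u y : nat -> R) a b :
  RInt (fun x => sum_f_R0 (fun k => u k * x ^ k) n * sum_f_R0 (fun k => y k * x ^ k) n) a b
  = sum_f_R0 (fun k => sum_f_R0 (fun l => u k * y l * RInt (fun x => x ^ (k + l)) a b) n) n.
Proof.
  rewrite (RInt_ext _ (fun x => sum_f_R0 (fun k => sum_f_R0 (fun l => u k * y l * x ^ (k + l)) n) n)).
  2:{ intros x _. rewrite Rmult_comm, scal_sum. apply sum_eq. intros k _.
      rewrite scal_sum. apply sum_eq. intros l _. rewrite pow_add. ring. }
  rewrite RInt_sum.
  2:{ intros k x. apply cont_sum. intros l.
      apply (continuous_mult (fun _ => u k * y l)). apply continuous_const. apply pow_cont. }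
  apply sum_eq. intros k _.
  rewrite RInt_sum.
  2:{ intros l x. apply (continuous_mult (fun _ => u k * y l)). apply continuous_const. apply pow_cont. }
  apply sum_eq. intros l _. apply RInt_scal'. intros; apply pow_cont.
Qed.

Section DW.
Variables a0 b0 : R.

Lemma dw_const c t : deriv_within a0 b0 (fun _ => c) t 0.
Proof.
  intros eps He. exists 1. split; [lra|]. intros s _ _.
  replace (c - c - 0 * (s - t)) with 0 by ring. rewrite Rabs_R0.
  apply Rmult_le_pos; [lra|apply Rabs_pos].
Qed.

Lemma dw_ext f g t l : (forall s, f s = g s) -> deriv_within a0 b0 f t l -> deriv_within a0 b0 g t l.
Proof.
  intros E H eps He. destruct (H eps He) as [d [Hd Hs]]. exists d; split; auto.
  intros s H1 H2. rewrite <- !E. auto.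
Qed.

Lemma dw_val f t l l' : l = l' -> deriv_within a0 b0 f t l -> deriv_within a0 b0 f t l'.
Proof. intros ->; auto. Qed.

Lemma dw_plus f g t l1 l2 : deriv_within a0 b0 f t l1 -> deriv_within a0 b0 g t l2 ->
  deriv_within a0 b0 (fun s => f s + g s) t (l1 + l2).
Proof.
  intros Hf Hg eps He.
  destruct (Hf (eps/2)) as [d1 [Hd1 H1]]; [lra|].
  destruct (Hg (eps/2)) as [d2 [Hd2 H2]]; [lra|].
  exists (Rmin d1 d2). split; [apply Rmin_pos; auto|].
  intros s Hs Hst.
  assert (A1 := H1 s Hs (Rlt_le_trans _ _ _ Hst (Rmin_l _ _))).
  assert (A2 := H2 s Hs (Rlt_le_trans _ _ _ Hst (Rmin_r _ _))).
  replace (f s + g s - (f t + g t) - (l1 + l2) * (s - t)) with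
    ((f s - f t - l1 * (s - t)) + (g s - g t - l2 * (s - t))) by ring.
  eapply Rle_trans; [apply Rabs_triang|]. lra.
Qed.

Lemma dw_mult f g t l1 l2 : deriv_within a0 b0 f t l1 -> deriv_within a0 b0 g t l2 ->
  deriv_within a0 b0 (fun s => f s * g s) t (l1 * g t + f t * l2).
Proof.
  intros Hf Hg eps He.
  set (A := Rabs l1). set (B := Rabs l2). set (F := Rabs (f t)). set (G := Rabs (g t)).
  assert (HA : 0 <= A) by apply Rabs_pos. assert (HB : 0 <= B) by apply Rabs_pos.
  assert (HF : 0 <= F) by apply Rabs_pos. assert (HG : 0 <= G) by apply Rabs_pos.
  destruct (Hf 1) as [d1 [Hd1 H1]]; [lra|].
  destruct (Hg 1) as [d2 [Hd2 H2]]; [lra|].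
  set (e1 := eps / (3 * (G + 1))). set (e2 := eps / (3 * (F + 1))).
  assert (He1 : 0 < e1) by (unfold e1; apply Rdiv_lt_0_compat; lra).
  assert (He2 : 0 < e2) by (unfold e2; apply Rdiv_lt_0_compat; lra).
  destruct (Hf e1 He1) as [d3 [Hd3 H3]].
  destruct (Hg e2 He2) as [d4 [Hd4 H4]].
  set (d5 := eps / (3 * ((1 + A) * (1 + B)))).
  assert (Hd5 : 0 < d5) by (unfold d5; apply Rdiv_lt_0_compat; nra).
  exists (Rmin (Rmin d1 d2) (Rmin (Rmin d3 d4) d5)).
  split. { repeat apply Rmin_pos; auto. }
  intros s Hs Hst.
  assert (Hm1 := Rmin_l (Rmin d1 d2) (Rmin (Rmin d3 d4) d5)).
  assert (Hm2 := Rmin_r (Rmin d1 d2) (Rmin (Rmin d3 d4) d5)).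
  assert (Q1 := Rmin_l d1 d2). assert (Q2 := Rmin_r d1 d2).
  assert (Q3 := Rmin_l (Rmin d3 d4) d5). assert (Q4 := Rmin_r (Rmin d3 d4) d5).
  assert (Q5 := Rmin_l d3 d4). assert (Q6 := Rmin_r d3 d4).
  specialize (H1 s Hs ltac:(lra)). specialize (H2 s Hs ltac:(lra)).
  specialize (H3 s Hs ltac:(lra)). specialize (H4 s Hs ltac:(lra)).
  set (h := s - t) in *. set (X := f s - f t - l1 * h) in *. set (Y := g s - g t - l2 * h) in *.
  assert (Hh : Rabs h < d5) by lra.
  assert (Hh0 : 0 <= Rabs h) by apply Rabs_pos.
  replace (f s * g s - f t * g t - (l1 * g t + f t * l2) * h) with
    (X * g t + f t * Y + (X + l1 * h) * (Y + l2 * h)) by (unfold X, Y; ring).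
  assert (B1 : Rabs (X * g t) <= eps / 3 * Rabs h).
  { rewrite Rabs_mult. fold G.
    assert (E : e1 * (G + 1) = eps / 3) by (unfold e1; field; lra).
    assert (0 <= Rabs X) by apply Rabs_pos. nra. }
  assert (B2 : Rabs (f t * Y) <= eps / 3 * Rabs h).
  { rewrite Rabs_mult. fold F.
    assert (E : e2 * (F + 1) = eps / 3) by (unfold e2; field; lra).
    assert (0 <= Rabs Y) by apply Rabs_pos. nra. }
  assert (B3 : Rabs ((X + l1 * h) * (Y + l2 * h)) <= eps / 3 * Rabs h).
  { rewrite Rabs_mult.
    assert (C1 : Rabs (X + l1 * h) <= (1 + A) * Rabs h).
    { eapply Rle_trans; [apply Rabs_triang|]. rewrite Rabs_mult. fold A. lra. }
    assert (C2 : Rabs (Y + l2 * h) <= (1 + B) * Rabs h).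
    { eapply Rle_trans; [apply Rabs_triang|]. rewrite Rabs_mult. fold B. lra. }
    assert (E : d5 * ((1 + A) * (1 + B)) = eps / 3) by (unfold d5; field; nra).
    assert (0 <= Rabs (X + l1 * h)) by apply Rabs_pos.
    assert (0 <= Rabs (Y + l2 * h)) by apply Rabs_pos.
    apply Rle_trans with (((1 + A) * Rabs h) * ((1 + B) * Rabs h)).
    - apply Rmult_le_compat; auto.
    - assert (K0 : 0 < (1 + A) * (1 + B)) by nra.
      assert (K1 : (1 + A) * (1 + B) * Rabs h <= (1 + A) * (1 + B) * d5) by
        (apply Rmult_le_compat_l; lra).
      assert (K2 : (1 + A) * (1 + B) * Rabs h * Rabs h <= (1 + A) * (1 + B) * d5 * Rabs h) by
        (apply Rmult_le_compat_r; lra).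
      nra. }
  eapply Rle_trans; [apply Rabs_triang|].
  eapply Rle_trans; [apply Rplus_le_compat_r; apply Rabs_triang|]. lra.
Qed.

Lemma dw_scal_r f t l c : deriv_within a0 b0 f t l ->
  deriv_within a0 b0 (fun s => f s * c) t (l * c).
Proof.
  intros H. eapply dw_val; [|apply (dw_mult f (fun _ => c) t l 0 H (dw_const c t))]. ring.
Qed.

Lemma dw_sum n (F : nat -> R -> R) (d : nat -> R) t :
  (forall k, (k <= n)%nat -> deriv_within a0 b0 (F k) t (d k)) ->
  deriv_within a0 b0 (fun s => sum_f_R0 (fun k => F k s) n) t (sum_f_R0 d n).
Proof.
  intros H. induction n as [|n IH]; simpl.
  - apply H; lia.
  - apply (dw_plus (fun s => sum_f_R0 (fun k => F k s) n) (F (S n))).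
    + apply IH. intros; apply H; lia.
    + apply H; lia.
Qed.

Lemma dw_list (l : list nat) (F : nat -> R -> R) (d : nat -> R) t :
  (forall j, In j l -> deriv_within a0 b0 (F j) t (d j)) ->
  deriv_within a0 b0 (fun s => fold_right Rplus 0 (map (fun j => F j s) l)) t
     (fold_right Rplus 0 (map d l)).
Proof.
  induction l as [|j l IH]; intros H; simpl.
  - apply dw_const.
  - apply (dw_plus (F j) (fun s => fold_right Rplus 0 (map (fun j => F j s) l))).
    + apply H; simpl; auto.
    + apply IH. intros; apply H; simpl; auto.
Qed.
End DW.

Lemma fold_plus_c (l : list R) c : fold_right Rplus c l = fold_right Rplus 0 l + c.
Proof. induction l as [|x l IH]; simpl; [ring| rewrite IH; ring]. Qed.

Lemma sumj_plus N f g : sumj N (fun j => f j + g j) = sumj N f + sumj N g.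
Proof. unfold sumj. induction (seq 1 N) as [|x l IH]; simpl; [ring|rewrite IH; ring]. Qed.

Lemma sumj_minus N f g : sumj N (fun j => f j - g j) = sumj N f - sumj N g.
Proof. unfold sumj. induction (seq 1 N) as [|x l IH]; simpl; [ring|rewrite IH; ring]. Qed.

Lemma sumj_scal N c f : sumj N (fun j => c * f j) = c * sumj N f.
Proof. unfold sumj. induction (seq 1 N) as [|x l IH]; simpl; [ring|rewrite IH; ring]. Qed.

Lemma sumj_ext N f g : (forall j, (1 <= j <= N)%nat -> f j = g j) -> sumj N f = sumj N g.
Proof.
  intros H. unfold sumj. f_equal. apply map_ext_in. intros j Hj.
  apply in_seq in Hj. apply H. lia.
Qed.

Lemma sumj_zero N f : (forall j, f j = 0) -> sumj N f = 0.
Proof. intros H. unfold sumj. induction (seq 1 N) as [|x l IH]; simpl; [ring|rewrite IH, H; ring]. Qed.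

Lemma sumj_shift N (X : nat -> R) : (0 < N)%nat -> X 0%nat = X N ->
  sumj N (fun j => X (j - 1)%nat) = sumj N X.
Proof.
  intros HN H0. unfold sumj.
  assert (E : map (fun j => X (j - 1)%nat) (seq 1 N) = map X (seq 0 N)).
  { rewrite <- seq_shift, map_map. apply map_ext. intros; f_equal; lia. }
  rewrite E. destruct N as [|M]; [lia|].
  rewrite (seq_S M 1). simpl. rewrite map_app, fold_right_app. simpl.
  rewrite (fold_plus_c (map X (seq 1 M)) (X (S M) + 0)).
  rewrite H0. ring.
Qed.

Lemma trR_per N p xs u : (0 < N)%nat -> trR N p xs u 0 = trR N p xs u N.
Proof.
  intros H. unfold trR. rewrite Nat.eqb_refl. destruct N; [lia|]. reflexivity.
Qed.

Lemma trL_per N p xs u : (0 < N)%nat -> trL N p xs u 0 = trL N p xs u N.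
Proof.
  intros H. unfold trL. destruct N; [lia|]. reflexivity.
Qed.

Definition BS n (u y : nat -> R) a b :=
  sum_f_R0 (fun k => sum_f_R0 (fun l => u k * y l * RInt (fun x => x ^ (k + l)) a b) n) n.

Lemma cellQ n u y a b :
  RInt (fun x => sum_f_R0 (fun k => u k * x ^ k) n ^ 2 + sum_f_R0 (fun k => y k * x ^ k) n ^ 2) a b
  = BS n u u a b + BS n y y a b.
Proof.
  rewrite (RInt_ext (V:=R_CompleteNormedModule) _ (fun x => sum_f_R0 (fun k => u k * x ^ k) n * sum_f_R0 (fun k => u k * x ^ k) n
     + sum_f_R0 (fun k => y k * x ^ k) n * sum_f_R0 (fun k => y k * x ^ k) n)).
  2:{ intros x _. simpl. ring. }
  rewrite RInt_plus'. unfold BS. rewrite !bilin. reflexivity.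
  - intros x. apply (continuous_mult (fun x => sum_f_R0 (fun k => u k * x ^ k) n)); apply P_cont.
  - intros x. apply (continuous_mult (fun x => sum_f_R0 (fun k => y k * x ^ k) n)); apply P_cont.
Qed.

Lemma Dcell n u du a b :
  sum_f_R0 (fun k => sum_f_R0 (fun l => (du k * u l + u k * du l) * RInt (fun x => x ^ (k + l)) a b) n) n
  = 2 * RInt (fun x => sum_f_R0 (fun k => du k * x ^ k) n * sum_f_R0 (fun k => u k * x ^ k) n) a b.
Proof.
  replace (2 * RInt (fun x => sum_f_R0 (fun k => du k * x ^ k) n * sum_f_R0 (fun k => u k * x ^ k) n) a b)
  with (RInt (fun x => sum_f_R0 (fun k => du k * x ^ k) n * sum_f_R0 (fun k => u k * x ^ k) n) a b
       + RInt (fun x => sum_f_R0 (fun k => u k * x ^ k) n * sum_f_R0 (fun k => du k * x ^ k) n) a b).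
  2:{ rewrite (RInt_ext (V:=R_CompleteNormedModule) (fun x => sum_f_R0 (fun k => u k * x ^ k) n * sum_f_R0 (fun k => du k * x ^ k) n)
        (fun x => sum_f_R0 (fun k => du k * x ^ k) n * sum_f_R0 (fun k => u k * x ^ k) n))
        by (intros; simpl; ring). ring. }
  rewrite !bilin. rewrite <- sum_plus. apply sum_eq. intros k _.
  rewrite <- sum_plus. apply sum_eq. intros l _. ring.
Qed.

Lemma cont3 (f g h : R -> R) x : continuous f x -> continuous g x -> continuous h x ->
  continuous (fun y => f y * g y * h y) x.
Proof.
  intros. apply (continuous_mult (fun y => f y * g y) h); auto.
  apply (continuous_mult f g); auto.
Qed.

Theorem proposition2p3
  (alpha beta T : R) (p N : nat) (xs : nat -> R)
  (v w psi vt wt psit : R -> nat -> nat -> R) :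
  0 < alpha -> 0 < beta -> 0 < T -> (0 < N)%nat ->
  (forall i, (i < N)%nat -> xs i < xs (S i)) ->
  (* time differentiability: vt, wt, psit are the time derivatives *)
  (forall t j k, 0 <= t <= T -> (1 <= j <= N)%nat -> (k <= p)%nat ->
     deriv_within 0 T (fun s => v s j k) t (vt t j k) /\
     deriv_within 0 T (fun s => w s j k) t (wt t j k) /\
     deriv_within 0 T (fun s => psi s j k) t (psit t j k)) ->
  (forall t, 0 <= t <= T ->
   let c := fun j x => cfun alpha beta (pe p (psi t) j x) in
   let cb := cbar alpha beta N p xs (psi t) in
   (forall phi : nat -> nat -> R,
      sumj N (fun j => cellint xs j (fun x => pe p (vt t) j x * pe p phi j x))
      + sumj N (fun j => cellint xs j (fun x =>
            c j x * pe p (w t) j x * Derive (fun y => pe p phi j y) x))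
      - sumj N (fun j => cb j * avg N p xs (w t) j * trL N p xs phi j)
      + sumj N (fun j => cb (j - 1)%nat * avg N p xs (w t) (j - 1)%nat
                         * trR N p xs phi (j - 1)%nat)
      = sumj N (fun j => cellint xs j (fun x =>
            c j x * Derive (fun y => pe p (w t) j y * pe p phi j y) x))
      - sumj N (fun j => cb j * trL N p xs (w t) j * trL N p xs phi j)
      + sumj N (fun j => cb (j - 1)%nat * trR N p xs (w t) (j - 1)%nat
                         * trR N p xs phi (j - 1)%nat)) /\
   (forall eta : nat -> nat -> R,
      sumj N (fun j => cellint xs j (fun x => pe p (wt t) j x * pe p eta j x))
      + sumj N (fun j => cellint xs j (fun x =>
            c j x * pe p (v t) j x * Derive (fun y => pe p eta j y) x))
      - sumj N (fun j => cb j * avg N p xs (v t) j * trL N p xs eta j)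
      + sumj N (fun j => cb (j - 1)%nat * avg N p xs (v t) (j - 1)%nat
                         * trR N p xs eta (j - 1)%nat)
      = 0) /\
   (forall zeta : nat -> nat -> R,
      sumj N (fun j => cellint xs j (fun x => pe p (psit t) j x * pe p zeta j x))
      = sumj N (fun j => cellint xs j (fun x => pe p (v t) j x * pe p zeta j x)))) ->
  forall t, 0 <= t <= T ->
    deriv_within 0 T
      (fun s => sumj N (fun j => cellint xs j (fun x =>
                  (pe p (v s) j x) ^ 2 + (pe p (w s) j x) ^ 2))) t 0.
Proof.
  intros Ha Hb HT HN Hxs Hdt Heqs t Ht.
  specialize (Heqs t Ht). cbv beta zeta in Heqs.
  destruct Heqs as [Heq1 [Heq2 _]].
  specialize (Heq1 (v t)). specialize (Heq2 (w t)).
  set (cb := cbar alpha beta N p xs (psi t)) in *.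
  set (A1 := sumj N (fun j => cellint xs j (fun x => pe p (vt t) j x * pe p (v t) j x))) in *.
  set (A2 := sumj N (fun j => cellint xs j (fun x => pe p (wt t) j x * pe p (w t) j x))) in *.
  assert (KEY : A1 + A2 = 0).
  { assert (HB : sumj N (fun j => cellint xs j (fun x => cfun alpha beta (pe p (psi t) j x) * pe p (w t) j x * Derive (fun y => pe p (v t) j y) x))
      + sumj N (fun j => cellint xs j (fun x => cfun alpha beta (pe p (psi t) j x) * pe p (v t) j x * Derive (fun y => pe p (w t) j y) x))
      = sumj N (fun j => cellint xs j (fun x => cfun alpha beta (pe p (psi t) j x) * Derive (fun y => pe p (w t) j y * pe p (v t) j y) x))).
    { rewrite <- sumj_plus. apply sumj_ext. intros j _. unfold cellint, pe. rewrite <- RInt_plus'.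
      - apply RInt_ext. intros x _. simpl. rewrite Derive_mult by apply P_ex_derive. ring.
      - intros x; apply cont3; [apply c_cont | apply P_cont | apply DP_cont].
      - intros x; apply cont3; [apply c_cont | apply P_cont | apply DP_cont]. }
    assert (Per : forall X : nat -> R, X 0%nat = X N -> sumj N (fun j => X (j - 1)%nat) = sumj N X).
    { intros X HX. apply sumj_shift; auto. }
    rewrite (Per (fun i => cb i * avg N p xs (w t) i * trR N p xs (v t) i)) in Heq1
      by (unfold cb, cbar, avg; rewrite !trR_per, !trL_per by auto; reflexivity).
    rewrite (Per (fun i => cb i * trR N p xs (w t) i * trR N p xs (v t) i)) in Heq1
      by (unfold cb, cbar, avg; rewrite !trR_per, !trL_per by auto; reflexivity).
    rewrite (Per (fun i => cb i * avg N p xs (v t) i * trR N p xs (w t) i)) in Heq2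
      by (unfold cb, cbar, avg; rewrite !trR_per, !trL_per by auto; reflexivity).
    assert (Z : sumj N (fun j => cb j * avg N p xs (w t) j * trR N p xs (v t) j - cb j * avg N p xs (w t) j * trL N p xs (v t) j
       + (cb j * avg N p xs (v t) j * trR N p xs (w t) j - cb j * avg N p xs (v t) j * trL N p xs (w t) j)
       - (cb j * trR N p xs (w t) j * trR N p xs (v t) j - cb j * trL N p xs (w t) j * trL N p xs (v t) j)) = 0).
    { apply sumj_zero. intros j. unfold avg. field. }
    repeat (rewrite sumj_minus in Z || rewrite sumj_plus in Z).
    lra. }
  apply (dw_val 0 T _ t (sumj N (fun j => 2 * cellint xs j (fun x => pe p (vt t) j x * pe p (v t) j x)
     + 2 * cellint xs j (fun x => pe p (wt t) j x * pe p (w t) j x)))).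
  { rewrite sumj_plus, !sumj_scal. unfold A1, A2 in KEY. lra. }
  unfold sumj. apply dw_list. intros j Hj. apply in_seq in Hj.
  eapply dw_ext. { intros s. unfold cellint, pe. symmetry. apply cellQ. }
  unfold cellint, pe. rewrite <- !Dcell.
  apply dw_plus; unfold BS; apply dw_sum; intros k Hk; apply dw_sum; intros l Hl;
    apply dw_scal_r; apply dw_mult;
    match goal with
    | |- deriv_within _ _ (fun s => v s j ?k) t _ =>
        apply (proj1 (Hdt t j k Ht ltac:(lia) ltac:(lia)))
    | |- deriv_within _ _ (fun s => w s j ?k) t _ =>
        apply (proj1 (proj2 (Hdt t j k Ht ltac:(lia) ltac:(lia))))
    end.
Qed.
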